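(* For $n\in\mathbb{N}_{\geq 1}$ let $c_n$ denote the minimal Colless index among all rooted binary trees with $n$ leaves, and let $k_n=\lceil\log_2(n)\rceil$. Then $$c_n=\sum_{i=0}^{k_n-2}\frac{s(2^{i-k_n+1}\cdot n)}{2^{i-k_n+1}},$$ where $s(x)=\min_{z\in\mathbb{Z}}|x-z|$ is the distance from $x$ to the nearest integer (an empty sum is $0$).
   Context: A rooted binary tree with $n\geq 2$ leaves is a rooted tree whose root has degree 2 and all other internal nodes have degree 3; for $n=1$ it is a single node. For an internal node $v$ with children $v_1,v_2$, let $\kappa(v_i)$ be the number of leaves descending from $v_i$ ($1$ if $v_i$ is a leaf). The Colless index of $T$ is $\mathcal{C}(T)=\sum_{v}|\kappa(v_1)-\kappa(v_2)|$ over all internal nodes $v$. *)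

(* Defs.v *)
From mathcomp Require Import all_boot all_order all_algebra.
Set Implicit Arguments. Unset Strict Implicit. Unset Printing Implicit Defensive.
Import Order.TTheory GRing.Theory Num.Theory.

Inductive bintree : Type :=
| Leaf : bintree
| Node : bintree -> bintree -> bintree.

Fixpoint leaves (t : bintree) : nat :=
  match t with
  | Leaf => 1
  | Node l r => leaves l + leaves r
  end.

Fixpoint colless (t : bintree) : nat :=
  match t with
  | Leaf => 0
  | Node l r => absz (Posz (leaves l) - Posz (leaves r)) + colless l + colless r
  end.

Definition min_colless (n : nat) (c : nat) : Prop :=
  (exists t, leaves t = n /\ colless t = c) /\
  (forall t, leaves t = n -> c <= colless t).

Local Open Scope ring_scope.

Definition sdist (x : rat) : rat :=
  Num.min (x - (Num.floor x)%:~R) ((Num.ceil x)%:~R - x).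

(* k_n = ceil(log2 n) : the least e with n <= 2^e (for n >= 1) *)
Definition kn (n : nat) : nat := up_log 2 n.

Definition colless_formula (n : nat) : rat :=
  \sum_(0 <= i < kn n - 1)
     sdist ((2%:Q ^ (Posz i - Posz (kn n) + 1)) * n%:R)
       / (2%:Q ^ (Posz i - Posz (kn n) + 1)).

(* Main.v *)
Require Import Defs.
From mathcomp Require Import all_boot all_order all_algebra zify lra.
Import Order.TTheory GRing.Theory Num.Theory.


Definition dd (j n : nat) : nat := minn (n %% 2^j) (2^j - n %% 2^j).
Definition G (n : nat) : nat := \sum_(0 <= j < up_log 2 n) dd j n.

Lemma modn_char q r D : r < D -> (q * D + r) %% D = r.
Proof. by move=> h; rewrite modnMDl modn_small. Qed.

Lemma dd0 n : dd 0 n = 0.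
Proof. by rewrite /dd expn0 modn1. Qed.

Lemma dd_even j m : dd j.+1 (2 * m) = 2 * dd j m.
Proof.
rewrite /dd expnS -muln_modr.
have := ltn_pmod m (expn_gt0 2 j); lia.
Qed.

Lemma dd1_odd m : dd 1 (2 * m + 1) = 1.
Proof. rewrite /dd expn1 (_ : 2 * m + 1 = m * 2 + 1) ?modn_char //; lia. Qed.

Lemma dd_odd j m : dd j.+2 (2 * m + 1) = dd j.+1 m + dd j.+1 (m + 1).
Proof.
rewrite /dd.
set M := 2 ^ j.
have hM : 0 < M by rewrite expn_gt0.
have e1 : 2 ^ j.+1 = 2 * M by rewrite expnS.
have e2 : 2 ^ j.+2 = 2 * (2 * M) by rewrite !expnS.
rewrite e1 e2.
have h2M : 0 < 2 * M by lia.
have hr := ltn_pmod m h2M.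
rewrite [in LHS](divn_eq m (2 * M)) [in RHS](divn_eq m (2 * M)).
set q := m %/ (2 * M); set r := m %% (2 * M).
rewrite (_ : 2 * (q * (2 * M) + r) + 1 = q * (2 * (2 * M)) + (2 * r + 1)); last by lia.
rewrite modn_char; last by lia.
rewrite modn_char //.
case: (ltnP (r + 1) (2 * M)) => h.
  rewrite (_ : q * (2 * M) + r + 1 = q * (2 * M) + (r + 1)); last by lia.
  rewrite modn_char //; lia.
rewrite (_ : q * (2 * M) + r + 1 = q.+1 * (2 * M) + 0); last by lia.
rewrite modn_char //; lia.
Qed.

Lemma ul_even m : 0 < m -> up_log 2 (2 * m) = (up_log 2 m).+1.
Proof.
move=> hm; case: (ltnP 1 m) => h.
  have /andP[h1 h2] := up_log_bounds (isT : 1 < 2) h.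
  have hk : 0 < up_log 2 m by rewrite up_log_gt0.
  apply: up_log_eq => //; apply/andP; split.
    move: h1; rewrite -{2}(prednK hk) expnS; lia.
  by rewrite expnS leq_mul2l.
have -> : m = 1 by lia.
by rewrite up_log1 muln1 up_lognn.
Qed.

Lemma ul_odd m : 0 < m -> up_log 2 (2 * m + 1) = (up_log 2 (m + 1)).+1.
Proof.
move=> hm; have h : 1 < m + 1 by lia.
have /andP[h1 h2] := up_log_bounds (isT : 1 < 2) h.
have hk : 0 < up_log 2 (m + 1) by rewrite up_log_gt0.
apply: up_log_eq => //; apply/andP; split.
  move: h1; rewrite -{2}(prednK hk) expnS; lia.
move: h2; rewrite expnS; lia.
Qed.

Lemma ul_succ m : 0 < m ->
  up_log 2 (m + 1) = up_log 2 m \/ (up_log 2 (m + 1) = (up_log 2 m).+1 /\ m = 2 ^ up_log 2 m).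
Proof.
move=> hm; have hP := up_logP m (isT : 1 < 2).
case: (ltnP m (2 ^ up_log 2 m)) => h.
  left; apply/eqP; rewrite eqn_leq; apply/andP; split.
    by apply: up_log_min => //; lia.
  by apply: leq_up_log; lia.
right; have e : m = 2 ^ up_log 2 m by lia.
split => //; apply: up_log_eq => //; apply/andP; split; first by lia.
rewrite expnS; lia.
Qed.

Lemma G0 : G 0 = 0. Proof. by rewrite /G up_log0 big_geq. Qed.
Lemma G1 : G 1 = 0. Proof. by rewrite /G up_log1 big_geq. Qed.

Lemma G_even m : G (2 * m) = 2 * G m.
Proof.
case: (posnP m) => [->|hm]; first by rewrite muln0 G0.
rewrite /G ul_even // big_nat_recl // dd0 add0n.
rewrite big_distrr /=; apply: eq_bigr => j _; exact: dd_even.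
Qed.

Lemma sum_shift (F : nat -> nat) k : \sum_(0 <= j < k.+1) F j = F 0 + \sum_(0 <= j < k) F j.+1.
Proof. by rewrite big_nat_recl. Qed.

Lemma G_odd m : 0 < m -> G (2 * m + 1) = G m + G (m + 1) + 1.
Proof.
move=> hm; rewrite /G ul_odd //.
have hK : 0 < up_log 2 (m + 1) by rewrite up_log_gt0; lia.
have [K eK] : exists K, up_log 2 (m + 1) = K.+1 by exists (up_log 2 (m + 1)).-1; rewrite prednK.
rewrite eK sum_shift dd0 add0n sum_shift dd1_odd.
rewrite (@sum_shift (fun j => dd j (m + 1))) dd0 add0n.
under eq_bigr => j _ do rewrite dd_odd.
rewrite big_split.
suff -> : \sum_(0 <= i < K) dd i.+1 m = \sum_(0 <= j < up_log 2 m) dd j m.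
  rewrite /=; lia.
case: (@ul_succ m hm) => [e|[e1 e2]].
  rewrite eK in e; rewrite -e big_nat_recl // dd0 //.
rewrite eK in e1; case: e1 => e1; rewrite -e1.
transitivity (\sum_(0 <= j < K.+1) dd j m); first by rewrite big_nat_recl // dd0.
rewrite big_nat_recr //=.
suff -> : dd K m = 0 by rewrite addn0.
rewrite /dd e1 -e2 modnn; lia.
Qed.

Definition ok a b := G (a + b) <= G a + G b + (a - b) + (b - a).

Lemma ok_sym a b : ok a b -> ok b a.
Proof. rewrite /ok addnC; lia. Qed.

Lemma par a : (exists x, a = 2 * x) \/ (exists x, a = 2 * x + 1).
Proof.
have := odd_double_half a; case: (odd a) => /= e.
  by right; exists a./2; rewrite -{1}e -muln2; lia.
by left; exists a./2; rewrite -{1}e -muln2; lia.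
Qed.

Section Ind.
Variable s : nat.
Hypothesis IH : forall s', s' < s -> forall a b, a + b = s' -> ok a b.

Lemma case_ee x y : 2 * x + 2 * y = s -> ok (2 * x) (2 * y).
Proof.
move=> hs; rewrite /ok.
case: (posnP (x + y)) => h.
  have -> : x = 0 by lia.
  have -> : y = 0 by lia.
  rewrite G0; lia.
have : ok x y by apply: (IH (x + y)) => //; lia.
rewrite /ok (_ : 2 * x + 2 * y = 2 * (x + y)); last by lia.
rewrite !G_even; lia.
Qed.

Lemma G_succ_le x : 0 < x -> x + 1 < s -> G (x + 1) <= G x + (x - 1).
Proof.
move=> hx hs; have : ok x 1 by apply: (IH (x + 1)).
rewrite /ok G1; lia.
Qed.

Lemma case_oo x y : 2 * x + 1 + (2 * y + 1) = s -> ok (2 * x + 1) (2 * y + 1).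
Proof.
move=> hs; rewrite /ok (_ : 2 * x + 1 + (2 * y + 1) = 2 * (x + y + 1)); last by lia.
rewrite G_even.
case: (posnP x) => hx; case: (posnP y) => hy.
- subst; rewrite /= G1; lia.
- subst x; rewrite muln0 add0n G1 G_odd // add0n.
  have : G (y + 1) <= G y + (y - 1) by apply: G_succ_le => //; lia.
  lia.
- subst y; rewrite muln0 G1 G_odd // addn0.
  have : G (x + 1) <= G x + (x - 1) by apply: G_succ_le => //; lia.
  lia.
- rewrite !G_odd //.
  have h1 : ok x (y + 1) by apply: (IH (x + (y + 1))) => //; lia.
  have h2 : ok (x + 1) y by apply: (IH (x + 1 + y)) => //; lia.
  move: h1 h2; rewrite /ok (_ : x + 1 + y = x + y + 1); last by lia.
  rewrite (_ : x + (y + 1) = x + y + 1); last by lia.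
  lia.
Qed.

Lemma case_eo x y : 2 * x + (2 * y + 1) = s -> ok (2 * x) (2 * y + 1).
Proof.
move=> hs; rewrite /ok.
case: (posnP x) => hx.
  subst x; rewrite muln0 add0n G0; lia.
rewrite (_ : 2 * x + (2 * y + 1) = 2 * (x + y) + 1); last by lia.
rewrite G_even G_odd; last by lia.
case: (posnP y) => hy.
  subst y; rewrite addn0 muln0 add0n G1.
  have : G (x + 1) <= G x + (x - 1) by apply: G_succ_le => //; lia.
  lia.
rewrite G_odd //.
have h1 : ok x y by apply: (IH (x + y)) => //; lia.
have h2 : ok x (y + 1) by apply: (IH (x + (y + 1))) => //; lia.
move: h1 h2; rewrite /ok (_ : x + (y + 1) = x + y + 1); last by lia.
lia.
Qed.

End Ind.

Lemma key_s s : forall a b, a + b = s -> ok a b.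
Proof.
elim/ltn_ind: s => s IH a b hs.
case: (par a) => [[x ea]|[x ea]]; case: (par b) => [[y eb]|[y eb]]; subst a b.
- by apply: (@case_ee s IH).
- by apply: (@case_eo s IH).
- by apply: ok_sym; apply: (@case_eo s IH); rewrite addnC.
- by apply: (@case_oo s IH).
Qed.

Lemma key a b : ok a b.
Proof. exact: (@key_s (a + b) a b (erefl _)). Qed.

Lemma absd a b : absz (Posz a - Posz b) = (a - b) + (b - a).
Proof.
case: (leqP a b) => h.
  rewrite distnEr //; lia.
rewrite distnEl; [lia | exact: ltnW].
Qed.

Lemma lower t : G (leaves t) <= colless t.
Proof.
elim: t => [|l IHl r IHr] /=; first by rewrite G1.
rewrite absd; have := key (leaves l) (leaves r); rewrite /ok; lia.
Qed.

Fixpoint bal (f n : nat) : bintree :=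
  match f with
  | 0 => Leaf
  | f.+1 => if n <= 1 then Leaf else Node (bal f (n - n./2)) (bal f n./2)
  end.

Lemma bal_ok f n : 1 <= n <= f -> leaves (bal f n) = n /\ colless (bal f n) = G n.
Proof.
elim: f n => [|f IH] n hn; first by lia.
rewrite /=; case: (leqP n 1) => h.
  have -> : n = 1 by lia.
  by rewrite G1.
have := odd_double_half n; rewrite -muln2 => eh.
have [h1 h2] : leaves (bal f (n - n./2)) = n - n./2 /\ colless (bal f (n - n./2)) = G (n - n./2).
  by apply: IH; case: (odd n) eh => /= eh; lia.
have [h3 h4] : leaves (bal f n./2) = n./2 /\ colless (bal f n./2) = G n./2.
  by apply: IH; case: (odd n) eh => /= eh; lia.
rewrite /= h1 h2 h3 h4 absd; split; first by lia.
case: (odd n) eh => /= eh.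
  have -> : n - n./2 = n./2 + 1 by lia.
  have -> : G n = G (2 * n./2 + 1) by congr G; lia.
  rewrite G_odd; lia.
have -> : n - n./2 = n./2 by lia.
have -> : G n = G (2 * n./2) by congr G; lia.
rewrite G_even; lia.
Qed.
Section RatPart.
Local Open Scope ring_scope.
Lemma intrN (k : nat) : (Posz k)%:~R = k%:R :> rat.
Proof. by []. Qed.

Lemma sd (N D : nat) : (0 < D)%N ->
  sdist (N%:R / D%:R) * D%:R = (minn (N %% D) (D - N %% D))%:R.
Proof.
move=> hD.
have hDr : 0 < D%:R :> rat by rewrite ltr0n.
set q := (N %/ D)%N; set r := (N %% D)%N.
have hr : (r < D)%N by rewrite ltn_pmod.
have eN : N%:R = q%:R * D%:R + r%:R :> rat by rewrite -natrM -natrD -divn_eq.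
pose y : rat := r%:R / D%:R.
have hy0 : 0 <= y by rewrite divr_ge0 ?ler0n.
have hy1 : y < 1 by rewrite ltr_pdivrMr // mul1r ltr_nat.
have ex : N%:R / D%:R = q%:R + y.
  by rewrite eN /y mulrDl mulfK // gt_eqF.
have hyD : y * D%:R = r%:R by rewrite /y mulfVK // gt_eqF.
have fl : Num.floor (q%:R + y) = Posz q.
  apply: floor_def; rewrite intrN -[(Posz q + 1)%R]/(Posz (q + 1)%N) intrN natrD.
  apply/andP; split; lra.
rewrite /sdist ex fl intrN.
case: (posnP r) => hr0.
  have hy : y = 0 by rewrite /y hr0 mul0r.
  rewrite hy addr0 -[q%:R]intrN intrKceil intrN subrr.
  rewrite minxx mul0r hr0.
  by have -> : minn 0 (D - 0) = 0%N by lia.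
have ypos : 0 < y by rewrite divr_gt0 ?ltr0n //.
have cl : Num.ceil (q%:R + y) = Posz (q + 1)%N.
  apply: ceil_def; rewrite (_ : (Posz (q + 1) - 1)%R = Posz q); last by rewrite PoszD addrK.
  rewrite !intrN natrD; apply/andP; split; lra.
rewrite cl intrN natrD (_ : q%:R + 1 - (q%:R + y) = 1 - y); last by lra.
rewrite minr_pMl ?ler0n // (_ : q%:R + y - q%:R = y); last by lra.
rewrite mulrBl mul1r hyD -natrB ?(ltnW hr) // -minEnat natr_min //.
Qed.

Lemma term (n j : nat) :
  sdist ((2%:Q ^ (- Posz j)) * n%:R) / (2%:Q ^ (- Posz j)) = (dd j n)%:R.
Proof.
rewrite -invr_expz invrK mulrC.
have e : (2%:~R : rat) ^ (Posz j) = (2 ^ j)%N%:R by rewrite natrX.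
rewrite e mulrC -[_ * n%:R]mulrC sd ?expn_gt0 //.
Qed.
Lemma formulaE n : colless_formula n = (G n)%:R.
Proof.
rewrite /colless_formula /G -/(kn n).
set k := kn n.
rewrite (@eq_big_nat _ _ _ 0 (k - 1) _ (fun i => (dd (k - 1 - i) n)%:R)); last first.
  move=> i /andP[_ hi].
  rewrite (_ : (Posz i - Posz k + 1)%R = - Posz (k - 1 - i)%N); first exact: term.
  lia.
rewrite big_nat_rev /= -natr_sum; congr (_%:R).
case: k => [|k]; first by rewrite !big_geq.
rewrite big_nat_recl // dd0 add0n subn1 /=.
apply: eq_big_nat => i /andP[_ hi]; congr dd; lia.
Qed.
End RatPart.
Theorem theorem2 (n : nat) (hn : (1 <= n)%N) (c : nat) :
  min_colless n c -> (c%:R : rat) = colless_formula n.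
Proof.
move=> [[t [hl hc]] hmin].
have hnn : (1 <= n <= n)%N by rewrite hn leqnn.
have [hb1 hb2] := @bal_ok n n hnn.
have e : c = G n.
  apply/eqP; rewrite eqn_leq; apply/andP; split.
    by rewrite -hb2; apply: hmin.
  by rewrite -hc -hl; apply: lower.
by rewrite e formulaE.
Qed.
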